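(* Every zero-error randomized streaming algorithm for \textsc{Find-Support-Elem} that is $\frac{n}{s}$-concentrated must use $\Omega\left(\frac{s}{\log n}\right)$ space.
   Context: \textsc{Find-Support-Elem} (turnstile model): a vector $z\in\mathbb{Z}^n$ starts at $0$ and receives a stream of updates of the form ``increment $z_i$ by 1'' or ``decrement $z_i$ by 1''; a valid input is one whose final vector is nonzero, and the goal is to output an index $i$ with $z_i\neq 0$ in the final vector. A randomized algorithm is zero-error if with probability one it either outputs a valid output or outputs $\bot$. An algorithm $A$ is $k$-concentrated if for every valid input $x$ there is some output $F(x)$ such that $\Pr_r[A(x,r)=F(x)]\ge \frac1k$. Space is in bits of memory of the one-pass streaming algorithm. *)

(* Defs.v *)
From HB Require Import structures.
From mathcomp Require Import all_boot all_order all_algebra.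
From mathcomp Require Import all_classical all_reals all_analysis.
Set Implicit Arguments. Unset Strict Implicit. Unset Printing Implicit Defensive.
Import Order.TTheory GRing.Theory Num.Theory.
Local Open Scope ring_scope.

(* A turnstile update on z in Z^n: (i, true) = "increment z_i by 1",
   (i, false) = "decrement z_i by 1". *)
Definition update (n : nat) := ('I_n * bool)%type.

Definition final_vec (n : nat) (x : seq (update n)) (i : 'I_n) : int :=
  \sum_(u <- x | u.1 == i) (if u.2 then 1 else -1).

Definition valid_input (n : nat) (x : seq (update n)) : Prop :=
  exists i : 'I_n, final_vec x i != 0.

(* The random seed r (drawn
   once from a probability space Omega) is accessible throughout
   (random-oracle style; randomness is not charged to space).
   Output None stands for "bot". *)
Record streaming_alg (n S : nat) (Omega : Type) := StreamingAlg {
  sa_init : Omega -> S.-tuple bool;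
  sa_step : Omega -> S.-tuple bool -> update n -> S.-tuple bool;
  sa_out  : Omega -> S.-tuple bool -> option 'I_n }.

Definition run (n S : nat) (Omega : Type) (A : streaming_alg n S Omega)
  (x : seq (update n)) (r : Omega) : option 'I_n :=
  sa_out A r (foldl (sa_step A r) (sa_init A r) x).

Definition ok_output (n : nat) (x : seq (update n)) (o : option 'I_n) : bool :=
  if o is Some i then final_vec x i != 0 else true.

(* Main.v *)
Set Warnings "-all".
Require Import Defs.
From HB Require Import structures.
From mathcomp Require Import all_boot all_order all_algebra.
From mathcomp Require Import all_classical all_reals all_analysis.
From mathcomp Require Import measurable_realfun.
From mathcomp Require Import zify ring lra.
Import Order.TTheory GRing.Theory Num.Theory.
Local Open Scope ring_scope.
Section Det.
Variables (n : nat) (F : seq (update n) -> 'I_n).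
Implicit Types (x y : seq (update n)) (T : {set 'I_n}).

Definition inc T : seq (update n) := [seq (i, true) | i <- enum T].
Definition validb x := [exists i, final_vec x i != 0].

Fixpoint dels T (t : nat) : seq (update n) :=
  if t is t'.+1 then
    let w := dels T t' in
    if validb (inc T ++ w) then rcons w (F (inc T ++ w), false) else w
  else [::].
Definition spath T t := inc T ++ dels T t.

Hypothesis Fspec : forall x, validb x -> final_vec x (F x) != 0.

Lemma final_vec_cat x y i : final_vec (x ++ y) i = final_vec x i + final_vec y i.
Proof. by rewrite /final_vec big_cat. Qed.

Lemma final_vec_rcons x j b i : final_vec (rcons x (j, b)) i =
  final_vec x i + (if j == i then (if b then 1 else -1) else 0).
Proof.
rewrite -cats1 final_vec_cat; congr (_ + _).
by rewrite /final_vec big_cons big_nil /=; case: (j == i); rewrite ?addr0.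
Qed.

Lemma final_vec_inc T i : final_vec (inc T) i = ((i \in T) : nat)%:Z.
Proof.
rewrite /final_vec /inc big_map /=.
rewrite (eq_bigr (fun _ => 1)) // big_enum_cond /=.
rewrite (eq_bigl (fun j => (j == i) && (j \in T))); last by move=> j; rewrite andbC.
rewrite big_mkcondr /= big_pred1_eq.
by case: (i \in T).
Qed.

Definition W T t := [set i | final_vec (spath T t) i != 0].

Lemma pathS T t : spath T t.+1 =
  if validb (spath T t) then rcons (spath T t) (F (spath T t), false) else spath T t.
Proof. by rewrite /spath /=; case: ifP => _ //; rewrite rcons_cat. Qed.

Lemma validbE x : validb x = [exists i, final_vec x i != 0].
Proof. by []. Qed.

Lemma inv T t : (forall i, final_vec (spath T t) i = ((i \in W T t) : nat)%:Z) /\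
   #|W T t| = (#|T| - t)%N /\ W T t \subset T.
Proof.
elim: t => [|t [IH1 [IH2 IH3]]].
  have E : forall i, final_vec (spath T 0) i = ((i \in T) : nat)%:Z.
    by move=> i; rewrite /spath /= cats0 final_vec_inc.
  have WT : W T 0 = T by apply/setP => i; rewrite inE E; case: (i \in T).
  by rewrite WT subn0; split.
rewrite /W pathS; case: ifP => V; last first.
  have W0 : #|W T t| = 0%N.
    apply/eqP; rewrite cards_eq0; apply/eqP/setP => i; rewrite !inE.
    by apply/negbTE; apply: contraFN V => Hi; apply/existsP; exists i.
  split; first by move=> i; rewrite -[in RHS](IH1 i).
  split; first by rewrite -/(W T t) W0; lia.
  exact: IH3.
set j := F (spath T t).
have Hj : j \in W T t by rewrite inE; exact: Fspec.
have E : forall i, final_vec (rcons (spath T t) (j, false)) i =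
                   ((i \in W T t :\ j) : nat)%:Z.
  move=> i; rewrite final_vec_rcons IH1 in_setD1.
  case: (eqVneq j i) => [<-|ji]; first by rewrite Hj /= subrr.
  by rewrite addr0.
have -> : [set i | final_vec (rcons (spath T t) (j, false)) i != 0] = W T t :\ j.
  by apply/setP => i; rewrite inE E; case: (i \in _).
split; first exact: E.
split; first by have := cardsD1 j (W T t); rewrite Hj IH2; lia.
by apply/fintype.subsetP => i; rewrite in_setD1 => /andP [_ /(fintype.subsetP IH3)].
Qed.


Definition jj T t := F (spath T t).

Lemma valid_path T t : (t < #|T|)%N -> validb (spath T t).
Proof.
move=> ht; have [_ [h2 _]] := inv T t.
have : (0 < #|W T t|)%N by rewrite h2; lia.
by case/card_gt0P => i; rewrite inE => hi; apply/existsP; exists i.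
Qed.

Lemma jj_in T t : (t < #|T|)%N -> jj T t \in W T t.
Proof. by move=> ht; rewrite inE; apply: Fspec; apply: valid_path. Qed.

Lemma WS T t : (t < #|T|)%N -> W T t.+1 = W T t :\ jj T t.
Proof.
move=> ht; have [h1 _] := inv T t.
apply/setP => i; rewrite inE pathS valid_path // final_vec_rcons h1 in_setD1.
rewrite /jj; case: (eqVneq (F (spath T t)) i) => [<-|ji].
  by have := jj_in _ _ ht; rewrite /jj => ->; rewrite eqxx.
by rewrite addr0; case: (i \in W T t).
Qed.

Lemma W_mono T u t : (u <= t)%N -> W T t \subset W T u.
Proof.
elim: t => [|t IH]; first by rewrite leqn0 => /eqP ->.
rewrite leq_eqVlt => /orP [/eqP -> //|]; rewrite ltnS => ut.
apply: (fintype.subset_trans _ (IH ut)).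
case: (ltnP t #|T|) => ht.
  by rewrite WS //; apply: subD1set.
rewrite /W pathS.
have [_ [h2 _]] := inv T t.
have -> : validb (spath T t) = false.
  apply/negbTE/negP => /existsP [i hi].
  have : (0 < #|W T t|)%N by apply/card_gt0P; exists i; rewrite inE.
  by rewrite h2; lia.
by [].
Qed.

Lemma jj_inj T u t : (u < #|T|)%N -> (t < #|T|)%N -> jj T u = jj T t -> u = t.
Proof.
wlog ut : u t / (u <= t)%N.
  move=> H hu ht e; case: (leqP u t) => h; first exact: H.
  by symmetry; apply: H => //; lia.
move=> hu ht e; apply/eqP; rewrite eqn_leq ut /=; apply/negP => tu.
have tu' : (u < t)%N by lia.
have := jj_in _ _ ht; rewrite -e => /(fintype.subsetP (W_mono T _ _ tu')).
by rewrite WS // in_setD1 eqxx.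
Qed.

Lemma jj_inT T t : (t < #|T|)%N -> jj T t \in T.
Proof.
move=> ht; have [_ [_ h3]] := inv T t.
by apply: (fintype.subsetP h3); apply: jj_in.
Qed.

Lemma fv_dels T t i : final_vec (dels T t) i =
  ((i \in W T t) : nat)%:Z - ((i \in T) : nat)%:Z.
Proof.
have [h1 _] := inv T t.
have := h1 i; rewrite /spath final_vec_cat final_vec_inc => <-.
by rewrite [_ + final_vec _ _]addrC addrK.
Qed.

Lemma fool_valid T T' t : (t < #|T|)%N -> #|T'| = #|T| ->
  validb (inc T' ++ dels T t).
Proof.
move=> ht hT; have [_ [h2 h3]] := inv T t.
have : ~~ (T' \subset T :\: W T t).
  apply/negP => /subset_leq_card.
  rewrite cardsD (finset.setIidPr h3) h2 hT; lia.
case/fintype.subsetPn => i iT' iD.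
apply/existsP; exists i.
rewrite final_vec_cat final_vec_inc fv_dels iT'.
move: iD; rewrite finset.in_setD negb_and negbK.
case: (boolP (i \in W T t)) => iW /=.
  by rewrite (fintype.subsetP h3 _ iW).
by move/negPf => ->.
Qed.

Lemma fool_mem T T' t : (t < #|T|)%N ->
  final_vec (inc T' ++ dels T t) (jj T t) != 0 -> jj T t \in T'.
Proof.
move=> ht; rewrite final_vec_cat final_vec_inc fv_dels jj_in // jj_inT //.
by case: (jj T t \in T').
Qed.

End Det.
Arguments inc {n}. Arguments validb {n}. Arguments dels {n}. Arguments spath {n}. Arguments W {n}. Arguments jj {n}.
Lemma supersets_card n (A : {set 'I_n}) :
  (#|[set T : {set 'I_n} | A \subset T]| * 2 ^ #|A| <= 2 ^ n)%N.
Proof.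
pose f (T : {set 'I_n}) := T :&: ~: A.
have inj : {in [set T : {set 'I_n} | A \subset T] &, injective f}.
  move=> T1 T2; rewrite !inE => h1 h2 e; apply/setP => i.
  have := congr1 (fun X : {set 'I_n} => i \in X) e; rewrite /f !finset.in_setI !finset.in_setC.
  case: (boolP (i \in A)) => iA /=; last by rewrite !andbT.
  by rewrite (fintype.subsetP h1 _ iA) (fintype.subsetP h2 _ iA).
rewrite -(card_in_imset inj).
have sub : f @: [set T : {set 'I_n} | A \subset T] \subset powerset (~: A).
  apply/fintype.subsetP => X /imsetP [T _ ->]; rewrite powersetE.
  exact: subsetIr.
have := subset_leq_card sub; rewrite card_powerset => h.
have hc := cardsC A; rewrite card_ord in hc.
apply: (leq_trans (leq_mul h (leqnn _))).
by rewrite -expnD addnC hc.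
Qed.

Lemma num_bound (a g m n : nat) : (a * 2 ^ g <= 2 ^ n)%N -> (g <= n)%N ->
  (a * g * 2 ^ m <= m * a * 2 ^ m + n * 2 ^ n)%N.
Proof.
move=> h gn; case: (leqP g m) => gm.
  apply: leq_trans (leq_addr _ _); rewrite [(m * a)%N]mulnC.
  by rewrite leq_mul2r leq_mul2l gm !orbT.
have e1 : (2 ^ m <= 2 ^ g)%N by rewrite leq_exp2l //; lia.
set X := (2 ^ m)%N in e1 *; set Y := (2 ^ g)%N in h e1 *; set Z := (2 ^ n)%N in h *.
have h1 : (a * g * X <= a * g * Y)%N by rewrite leq_mul2l e1 orbT.
have h2 : (g * (a * Y) <= g * Z)%N by rewrite leq_mul2l h orbT.
have h3 : (g * Z <= n * Z)%N by rewrite leq_mul2r gn orbT.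
nia.
Qed.

Lemma card_sets n : #|{set 'I_n}| = (2 ^ n)%N.
Proof. by rewrite -cardsT -powersetT card_powerset cardsT card_ord. Qed.

Definition Iq {n} {Q : finType} (cl : {set 'I_n} -> Q) (q : Q) : {set 'I_n} :=
  [set i | [forall T, (cl T == q) ==> (i \in T)]].

Lemma comb n (Q : finType) (cl : {set 'I_n} -> Q) m :
  (#|Q| * n <= 2 ^ m)%N ->
  (\sum_(T : {set 'I_n}) #|Iq cl (cl T)| <= (m + 1) * 2 ^ n)%N.
Proof.
move=> hQ.
rewrite (partition_big cl predT) //=.
pose a q := #|[set T | cl T == q]|.
rewrite (eq_bigr (fun q => a q * #|Iq cl q|)%N); last first.
  move=> q _; rewrite (eq_bigr (fun _ => #|Iq cl q|)); last by move=> T /= /eqP ->.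
  rewrite -sum_nat_const; apply: eq_bigl => T; by rewrite inE.
have sa : (\sum_q a q = 2 ^ n)%N.
  rewrite -card_sets -sum1_card (partition_big cl predT) //=.
  apply: eq_bigr => q _; rewrite /a -sum1_card; apply: eq_bigl => T; by rewrite inE.
have per : forall q, (a q * 2 ^ #|Iq cl q| <= 2 ^ n)%N.
  move=> q; have := supersets_card _ (Iq cl q); apply: leq_trans.
  rewrite leq_mul2r; apply/orP; right; apply: subset_leq_card.
  apply/fintype.subsetP => T; rewrite !inE => /eqP e.
  apply/fintype.subsetP => i; rewrite inE => /forallP /(_ T).
  by rewrite e eqxx.
have gn : forall q, (#|Iq cl q| <= n)%N.
  by move=> q; rewrite -[X in (_ <= X)%N](card_ord n); apply: max_card.
have key : ((\sum_q a q * #|Iq cl q|) * 2 ^ m <=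
            \sum_q (m * a q * 2 ^ m + n * 2 ^ n))%N.
  rewrite big_distrl /=; apply: leq_sum => q _; exact: num_bound.
rewrite big_split /= -!big_distrl /= -big_distrr /= sa sum_nat_const in key.
move: key; set k := (#|_| * n * 2 ^ n)%N => key.
have hQ' : (k <= 2 ^ m * 2 ^ n)%N.
  by rewrite /k leq_mul2r; apply/orP; right; exact: hQ.
rewrite -(@leq_pmul2r (2 ^ m)) ?expn_gt0 //.
apply: (leq_trans key).
set X := (2 ^ m)%N in hQ' *; set Y := (2 ^ n)%N in hQ' *.
nia.
Qed.
Local Open Scope classical_set_scope.
Section Prob.
Context {R : realType} {d : measure_display} {Omega : measurableType d}
  (P : probability Omega R).

Lemma P_inter (A B : set Omega) : measurable A -> measurable B ->
  P B = 1%E -> (P A <= P (A `&` B))%E.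
Proof.
move=> mA mB PB.
have sub : A `<=` (A `&` B) `|` ~` B.
  by move=> r Ar; case: (pselect (B r)) => Br; [left|right].
have h2 : (P A <= P (A `&` B) + P (~` B))%E.
  apply: (le_trans (le_measure P _ _ sub)); rewrite ?inE.
  - exact: mA.
  - by apply: measurableU; [apply: measurableI|apply: measurableC].
  apply: (le_trans (measureU2 P _ _)) => //.
  - exact: measurableI.
  - exact: measurableC.
have h : P (~` B) = 0%E by rewrite probability_setC // PB subee.
by rewrite h adde0 in h2.
Qed.

Lemma P_inter1 (A B : set Omega) : measurable A -> measurable B ->
  P A = 1%E -> P B = 1%E -> P (A `&` B) = 1%E.
Proof.
move=> mA mB PA PB; apply/eqP; rewrite eq_le probability_le1 /=; last exact: measurableI.
by rewrite -PA; apply: P_inter.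
Qed.

Lemma expect_bound (I : finType) (e : I -> Omega -> bool) (G : set Omega) (B : nat) :
  (forall k, measurable [set r | e k r]) -> measurable G -> P G = 1%E ->
  (forall r, G r -> (\sum_k (e k r : nat) <= B)%N) ->
  (\sum_k P [set r | e k r] <= (B%:R)%:E)%E.
Proof.
move=> me mG PG hB.
apply: (@le_trans _ _ (\sum_k P ([set r | e k r] `&` G))%E).
  by apply: lee_sum => k _; apply: P_inter.
rewrite (eq_bigr (fun k => \int[P]_(x in G) (\1_[set r | e k r] x)%:E)%E); last first.
  by move=> k _; rewrite integral_indic.
rewrite -ge0_integral_sum //; first last.
  by move=> k; apply: measurableT_comp => //; exact: measurable_indic.
apply: (@le_trans _ _ (\int[P]_(x in G) (B%:R)%:E)%E).
  apply: ge0_le_integral => //.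
  - by move=> x _; apply: sume_ge0 => k _; rewrite lee_fin indicE.
  - by apply: emeasurable_sum => k; apply: measurableT_comp => //; exact: measurable_indic.
  - move=> x Gx; rewrite sumEFin lee_fin.
    have := hB x Gx; rewrite -(ler_nat R) natr_sum; apply: le_trans.
    apply: ler_sum => k _; rewrite indicE.
    case: (boolP (e k x)) => h; first by rewrite mem_set.
    by rewrite memNset //; apply/negP.
rewrite integral_cst //.
have PG' : (P : {measure set Omega -> \bar R}) G = 1%E := PG.
by rewrite PG' mule1.
Qed.

Lemma meas_pred (X : finType) (f : Omega -> X) (D : pred X) :
  (forall o, measurable [set r | f r = o]) -> measurable [set r | D (f r)].
Proof.
move=> mf.
have H : forall s : seq X, measurable [set r | (f r \in s) && D (f r)].
  elim=> [|o s IH].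
    by rewrite (_ : [set r | _] = set0) //; apply/seteqP; split => r //=.
  rewrite (_ : [set r | _] = ([set r | f r = o] `&` [set _ | D o]) `|` [set r | (f r \in s) && D (f r)]).
    apply: measurableU => //; apply: measurableI => //.
    case: (D o).
      by rewrite (_ : [set _ | true] = setT) //; apply/seteqP; split.
    by rewrite (_ : [set _ | false] = set0) //; apply/seteqP; split.
  apply/seteqP; split => r /=.
    rewrite in_cons; case: (eqVneq (f r) o) => [->|_] /=; first by move=> Do; left.
    by move=> h; right.
  case=> [[-> Do]|]; first by rewrite in_cons eqxx.
  by rewrite in_cons => /andP [-> ->]; rewrite orbT.
rewrite (_ : [set r | _] = [set r | (f r \in enum X) && D (f r)]) //.
by apply/seteqP; split => r /=; rewrite mem_enum.
Qed.

Lemma fin_inter1 (I : eqType) (E : I -> set Omega) :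
  (forall k, measurable (E k)) -> (forall k, P (E k) = 1%E) ->
  forall s : seq I, measurable [set r | forall k, k \in s -> E k r] /\
                    P [set r | forall k, k \in s -> E k r] = 1%E.
Proof.
move=> mE PE; elim=> [|k s [IH1 IH2]].
  rewrite (_ : [set r | _] = setT); first by split => //; exact: probability_setT.
  by apply/seteqP; split => r //=.
rewrite (_ : [set r | _] = E k `&` [set r | forall k, k \in s -> E k r]).
  by split; [apply: measurableI|apply: P_inter1].
apply/seteqP; split => r /=.
  move=> h; split; first by apply: h; rewrite in_cons eqxx.
  by move=> k' hk'; apply: h; rewrite in_cons hk' orbT.
case=> h1 h2 k'; rewrite in_cons => /orP [/eqP ->|] //; exact: h2.
Qed.
End Prob.
Local Close Scope classical_set_scope.
Lemma sum_bool_card (X : finType) (b : X -> bool) :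
  (\sum_(i : X) (b i : nat) = #|[set i | b i]|)%N.
Proof.
rewrite -sum1_card [RHS]big_mkcond /=; apply: eq_bigr => i _.
by rewrite inE; case: (b i).
Qed.

Lemma sum_lt n c : (\sum_(t < n) ((t < c)%N : nat) = minn c n)%N.
Proof.
elim: n => [|n IH]; first by rewrite big_ord0 minn0.
rewrite big_ord_recr /= IH.
case: (ltnP n c) => h /=; lia.
Qed.

Local Open Scope classical_set_scope.
Lemma core {R : realType} n S d (Omega : measurableType d)
  (P : probability Omega R) (A : streaming_alg n S Omega)
  (F : seq (update n) -> 'I_n) (p : R) m :
  (forall x o, measurable [set r | run A x r = o]) ->
  (forall x, valid_input x -> P [set r | ok_output x (run A x r)] = 1%E) ->
  (forall x, validb x -> final_vec x (F x) != 0) ->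
  (forall x, validb x -> (p%:E <= P [set r | run A x r = Some (F x)])%E) ->
  (2 ^ S * n.+1 * n <= 2 ^ m)%N ->
  p * (\sum_(T : {set 'I_n}) #|T|)%:R <= ((m + 1) * 2 ^ n)%:R.
Proof.
move=> hm hz hF hp hQ.
pose cond (k : {set 'I_n} * {set 'I_n} * 'I_n) := (#|k.1.1| == #|k.1.2|) && (k.2 < #|k.1.2|)%N.
pose y (k : {set 'I_n} * {set 'I_n} * 'I_n) := inc k.1.1 ++ dels F k.1.2 k.2.
pose Eg (k : {set 'I_n} * {set 'I_n} * 'I_n) := [set r | cond k ==> ok_output (y k) (run A (y k) r)].
have mEg : forall k, measurable (Eg k).
  by move=> k; exact: (meas_pred _ (run A (y k)) (fun o => cond k ==> ok_output (y k) o) (hm (y k))).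
have PEg : forall k, P (Eg k) = 1%E.
  move=> k; case: (boolP (cond k)) => ck.
    have -> : Eg k = [set r | ok_output (y k) (run A (y k) r)].
      by apply/seteqP; split => r; rewrite /Eg /= ck.
    apply: hz; move: ck => /andP [/eqP h1 h2].
    have /existsP [i hi] := fool_valid _ _ hF _ _ _ h2 h1.
    by exists i.
  have -> : Eg k = setT by apply/seteqP; split => r; rewrite /Eg /= (negbTE ck).
  exact: probability_setT.
have [mG PG] := fin_inter1 P _ _ mEg PEg (enum {: {set 'I_n} * {set 'I_n} * 'I_n}).
set G := [set r | forall k, k \in enum {: {set 'I_n} * {set 'I_n} * 'I_n} -> Eg k r] in mG PG.
pose e (k : {set 'I_n} * 'I_n) r :=
  (k.2 < #|k.1|)%N && (run A (spath F k.1 k.2) r == Some (jj F k.1 k.2)).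
have me : forall k, measurable [set r | e k r].
  move=> k; exact: (meas_pred _ (run A (spath F k.1 k.2)) (fun o => (k.2 < #|k.1|)%N && (o == Some (jj F k.1 k.2)))
                      (hm (spath F k.1 k.2))).
have hB : forall r, G r -> (\sum_k (e k r : nat) <= (m + 1) * 2 ^ n)%N.
  move=> r Gr.
  pose st T := foldl (sa_step A r) (sa_init A r) (inc T).
  pose cl (T : {set 'I_n}) : (S.-tuple bool * 'I_n.+1)%type := (st T, inord #|T|).
  have hQ' : (#|{: S.-tuple bool * 'I_n.+1}| * n <= 2 ^ m)%N.
    by rewrite card_prod card_tuple card_bool card_ord.
  apply: (leq_trans _ (comb _ _ cl m hQ')).
  rewrite (eq_bigr (fun k => (e (k.1, k.2) r : nat))); last by case.
  rewrite -(pair_big predT predT (fun T t => (e (T, t) r : nat))) /=.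
  apply: leq_sum => T _.
  rewrite sum_bool_card.
  set Ss := finset (fun t : 'I_n => e (T, t) r).
  have inj : {in Ss &, injective (fun t : 'I_n => jj F T t)}.
    move=> t1 t2; rewrite !inE => /andP [h1 _] /andP [h2 _] eq.
    by apply: val_inj; exact: (jj_inj _ _ hF _ _ _ h1 h2 eq).
  rewrite -(card_in_imset inj); apply: subset_leq_card.
  apply/fintype.subsetP => j /imsetP [t]; rewrite inE => /andP [ht /eqP hrun] ->.
  rewrite inE; apply/forallP => T'; apply/implyP => /eqP hcl.
  have [hst hc] : st T' = st T /\ #|T'| = #|T|.
    case: hcl => -> hc; split => //.
    have lt1 : (#|T'| < n.+1)%N by rewrite ltnS -[X in (_ <= X)%N](card_ord n) max_card.
    have lt2 : (#|T| < n.+1)%N by rewrite ltnS -[X in (_ <= X)%N](card_ord n) max_card.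
    by move/(congr1 val): hc; rewrite /= (inordK lt1) (inordK lt2).
  have Gk := Gr (T', T, t) (mem_enum _ _).
  move: Gk; rewrite /Eg /= /cond /= hc eqxx ht /=.
  have -> : run A (y (T', T, t)) r = Some (jj F T t).
    rewrite -hrun /run /y /spath /= !foldl_cat.
    by move: hst; rewrite /st => ->.
  by move=> /=; exact: fool_mem.
have low : forall k : {set 'I_n} * 'I_n, ((if (k.2 < #|k.1|)%N then p else 0)%:E <= P [set r | e k r])%E.
  case=> T t /=; case: ifP => ht; last exact: measure_ge0.
  have -> : [set r | e (T, t) r] = [set r | run A (spath F T t) r = Some (F (spath F T t))].
    by apply/seteqP; split => r; rewrite /e /= ht /= => /eqP.
  by apply: hp; apply: valid_path.
have := expect_bound P _ e G _ me mG PG hB.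
have cnt : (\sum_(k : {set 'I_n} * 'I_n) ((k.2 < #|k.1|)%N : nat) = \sum_(T : {set 'I_n}) #|T|)%N.
  transitivity (\sum_(T : {set 'I_n}) \sum_(t : 'I_n) ((t < #|T|)%N : nat))%N.
    by rewrite pair_big /=; apply: eq_bigl => k.
  apply: eq_bigr => T _; rewrite sum_lt.
  by apply/minn_idPl; rewrite -[X in (_ <= X)%N](card_ord n) max_card.
have lowsum : ((p * (\sum_(T : {set 'I_n}) #|T|)%:R)%:E <= \sum_k P [set r | e k r])%E.
  apply: (@le_trans _ _ (\sum_(k : {set 'I_n} * 'I_n) (if (k.2 < #|k.1|)%N then p else 0)%:E)%E); last first.
    by apply: lee_sum => k _; exact: low.
  rewrite sumEFin lee_fin -cnt natr_sum mulr_sumr.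
  by rewrite le_eqVlt; apply/orP; left; apply/eqP/eq_bigr => k _; case: ifP; rewrite ?mulr1 ?mulr0.
move=> hup; have := le_trans lowsum hup.
by rewrite lee_fin.
Qed.

Lemma pos_inter {R : realType} d (Omega : measurableType d) (P : probability Omega R)
  (E G : set Omega) : measurable E -> measurable G -> P G = 1%E -> (0 < P E)%E ->
  exists r, E r /\ G r.
Proof.
move=> mE mG PG PE; apply: contrapT => hn.
have e0 : E `&` G = set0.
  by apply/seteqP; split => r // [Er Gr]; apply: hn; exists r.
have := P_inter P _ _ mE mG PG; rewrite e0 measure0 => h.
by move: PE; rewrite lt_neqAle => /andP [/eqP + _]; apply; apply/eqP; rewrite eq_le h measure_ge0.
Qed.

Lemma sumcard n : (2 * \sum_(T : {set 'I_n}) #|T| = n * 2 ^ n)%N.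
Proof.
have e : (\sum_(T : {set 'I_n}) #|T| = \sum_(T : {set 'I_n}) #|~: T|)%N.
  by rewrite (reindex_inj (@finset.setC_inj _)).
rewrite mul2n -addnn {2}e -big_split /=.
rewrite (eq_bigr (fun _ => n)); last by move=> T _; rewrite cardsC card_ord.
by rewrite sum_nat_const card_sets mulnC.
Qed.

Lemma fv1 n (j i : 'I_n) : final_vec [:: (j, true)] i = ((j == i) : nat)%:Z.
Proof. by rewrite /final_vec big_cons big_nil /=; case: (j == i); rewrite ?addr0. Qed.

Theorem mainTheorem8 (R : realType) :
  exists c : R, 0 < c /\
  forall (n : nat) (s : R) (S : nat) (d : measure_display)
         (Omega : measurableType d) (P : probability Omega R)
         (A : streaming_alg n S Omega),
    (1 < n)%N -> 0 < s ->
    (forall (x : seq (update n)) (o : option 'I_n),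
        measurable [set r | run A x r = o]) ->
    (forall x : seq (update n), valid_input x ->
        P [set r | ok_output x (run A x r)] = 1%E) ->
    (forall x : seq (update n), valid_input x ->
        exists i : 'I_n, ((s / n%:R)%:E <= P [set r | run A x r = Some i])%E) ->
    c * s / ln (n%:R) <= S%:R.
Proof.
have ln2 : 0 < ln (2 : R) by apply: ln_gt0; lra.
exists (ln 2 / 12); split; first by apply: divr_gt0 => //; lra.
move=> n s S d Omega P A hn hs hm hz hc.
set p := s / n%:R.
have n0 : (0 < n)%N by lia.
have hp0 : 0 < p by apply: divr_gt0 => //; rewrite ltr0n.
pose i0 : 'I_n := Ordinal n0.
have mok : forall x, measurable [set r | ok_output x (run A x r)].
  by move=> x; exact: (meas_pred _ (run A x) (ok_output x) (hm x)).
have ex : forall x, exists i : 'I_n, validb x ->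
    (final_vec x i != 0 /\ (p%:E <= P [set r | run A x r = Some i])%E).
  move=> x; case: (boolP (validb x)) => vx; last by exists i0.
  have vi : valid_input x by case/existsP: vx => i hi; exists i.
  have [i hi] := hc x vi; exists i => _; split => //.
  have [r [hr1 hr2]] : exists r, [set r | run A x r = Some i] r /\
                          [set r | ok_output x (run A x r)] r.
    apply: (pos_inter _ _ P _ _ (hm x (Some i)) (mok x) (hz x vi)).
    by apply: lt_le_trans hi; rewrite lte_fin.
  by move: hr2; rewrite /= hr1.
have [F HF] := choice ex.
have hF : forall x, validb x -> final_vec x (F x) != 0 by move=> x /(HF x) [].
have hp : forall x, validb x -> (p%:E <= P [set r | run A x r = Some (F x)])%E
  by move=> x /(HF x) [].
have S1 : (0 < S)%N.
  case: (posnP S) => // S0; exfalso; subst S.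
  pose i1 : 'I_n := Ordinal hn.
  pose x1 := [:: (i0, true)]; pose x2 := [:: (i1, true)].
  have v1 : validb x1 by apply/existsP; exists i0; rewrite fv1 eqxx.
  have v2 : validb x2 by apply/existsP; exists i1; rewrite fv1 eqxx.
  have Fx1 : F x1 = i0.
    by have := hF x1 v1; rewrite fv1; case: (eqVneq i0 (F x1)) => [->|_] //=.
  have eqrun : forall r, run A x1 r = run A x2 r.
    by move=> r; rewrite /run [foldl _ _ x1]tuple0 [foldl _ _ x2]tuple0.
  have vi2 : valid_input x2 by case/existsP: v2 => i hi; exists i.
  have [r [hr1 hr2]] : exists r, [set r | run A x2 r = Some i0] r /\
                          [set r | ok_output x2 (run A x2 r)] r.
    apply: (pos_inter _ _ P _ _ (hm x2 (Some i0)) (mok x2) (hz x2 vi2)).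
    have -> : [set r | run A x2 r = Some i0] = [set r | run A x1 r = Some (F x1)].
      by apply/seteqP; split => r /=; rewrite eqrun Fx1.
    by apply: lt_le_trans (hp x1 v1); rewrite lte_fin.
  by move: hr2; rewrite /= hr1 /ok_output /x2 fv1.
set k := trunc_log 2 n.
have hk1 : (2 ^ k <= n)%N := trunc_logP (isT : (1 < 2)%N) n0.
have hk2 : (n < 2 ^ k.+1)%N := trunc_log_ltn n (isT : (1 < 2)%N).
pose L := (2 * k.+1)%N.
have hQ : (2 ^ S * n.+1 * n <= 2 ^ (S + L))%N.
  rewrite expnD -mulnA leq_mul2l; apply/orP; right.
  rewrite /L mul2n -addnn expnD; apply: leq_mul => //; exact: ltnW.
have hcore := core _ _ _ _ P A F p (S + L) hm hz hF hp hQ.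
have sc := sumcard n.
set N := (\sum_(T : {set 'I_n}) #|T|)%N in hcore sc.
have eN : (N%:R : R) * 2 = n%:R * (2 ^ n)%:R.
  by have := congr1 (fun x : nat => (x%:R : R)) sc; rewrite /= !natrM mulrC => <-.
have X0 : (0 : R) < (2 ^ n)%:R by rewrite ltr0n expn_gt0.
have nn0 : (0 : R) < n%:R by rewrite ltr0n.
have epn : p * n%:R = s by rewrite /p divfK // gt_eqF.
have hs2 : s <= 2 * (S + L + 1)%N%:R.
  move: hcore; rewrite natrM => hcore.
  set X := ((2 ^ n)%N%:R : R) in X0 eN hcore.
  set M := ((S + L + 1)%N%:R : R) in hcore *.
  set NN := (N%:R : R) in eN hcore.
  set nn := (n%:R : R) in eN nn0 epn.
  have h1 : s * X <= 2 * M * X.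
    rewrite -epn -mulrA -eN; nra.
  by rewrite -(ler_pM2r X0).
have eL : ((S + L + 1)%N%:R : R) = S%:R + 2 * k%:R + 3.
  rewrite (_ : (S + L + 1 = S + 2 * k + 3)%N); last by rewrite /L; lia.
  rewrite !natrD; lra.
rewrite eL in hs2.
have ln2n : ln 2 <= ln (n%:R : R).
  rewrite ler_ln ?posrE ?nn0 //.
  by rewrite ler_nat.
have lnk : k%:R * ln 2 <= ln (n%:R : R).
  have := hk1; rewrite -(ler_nat R) natrX => h.
  have two0 : (0 : R) < 2 by lra.
  rewrite -(@ler_ln R) ?posrE ?exprn_gt0 ?nn0 // in h.
  by rewrite lnXn // in h; rewrite mulr_natl.
have lnn : 0 < ln (n%:R : R) by apply: lt_le_trans ln2n.
have S1R : (1 : R) <= S%:R by rewrite ler1n.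
rewrite ler_pdivrMr //.
have k0 : (0 : R) <= k%:R by [].
nra.
Qed.
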